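(* Let $(\mathbb T,o)\in\mathcal T$ and consider the TASEP on $\mathbb T$ started from the all-empty configuration, where $n$ particles are generated at the root according to an arbitrary rule. Assume (UE) holds with some $\varepsilon>0$. Then for all $m\in\mathbb N$, $$P_{\mathbb T}\big(z^m_i\ne z^m_j\ \text{for all }i,j\in\{1,\dots,n\},\,i\ne j\big)\ge1-n^2\Big(\frac1{1+\varepsilon}\Big)^{F_n(m)},$$ where $$F_n(m):=\begin{cases}\min\{F(o,x):x\in\mathcal Z_m\}-n,& d_{\mathbb T}=1,\\ m-\lceil n(d_{\mathbb T}-1)^{-1}\rceil,& d_{\mathbb T}\ge2.\end{cases}$$
   Context: $\mathcal T$: infinite, locally finite rooted trees $\mathbb T=(V,E,o)$ with edges directed from parent to child; $\mathcal Z_m$ the $m$-th generation. TASEP: a particle at $x$ jumps to a child $y$ at rate $r_{x,y}$ if $y$ is empty (positive, uniformly bounded rates); $P_{\mathbb T}$ its law. (UE): $r_{x,y}/r_{x,z}\ge\varepsilon$ for all $(x,y),(x,z)\in E$, some $\varepsilon\in(0,1]$. $z^m_i\in\mathcal Z_m$ is the unique site of generation $m$ visited by the $i$-th particle to enter the tree. $[o,x]$ is the set of vertices on the path from $o$ to $x$; $F(o,x):=|\{z\in[o,x]\setminus\{x\}:\deg(z)\ge3\}|$, where $\deg$ is the degree in the (undirected) tree. $d_{\mathbb T}$ is the smallest number of children of a vertex of $\mathbb T$. *)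

(* Defs.v *)
From HB Require Import structures.
From mathcomp Require Import all_boot all_order all_algebra.
From mathcomp Require Import reals.
Set Implicit Arguments.
Unset Strict Implicit.
Unset Printing Implicit Defensive.
Import Order.TTheory GRing.Theory Num.Theory.

(** * Trees (Ulam--Harris encoding)
   A locally finite rooted tree is encoded by a child-count function
   [c : seq nat -> nat].  Vertices are the words [w = [:: k1; ...; km]] with
   [k_(i+1) < c (take i w)]; the root [o] is [[::]]; the children of [w] are
   [rcons w k] for [k < c w] (edges directed parent -> child); the generation
   of [w] is [size w]; the path [o, x] consists of the prefixes [take i x],
   [i <= size x]. *)

Definition vertex (c : seq nat -> nat) (w : seq nat) : bool :=
  all (fun i => nth 0 w i < c (take i w)) (iota 0 (size w)).

Fixpoint gen (c : seq nat -> nat) (m : nat) : seq (seq nat) :=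
  if m is m'.+1 then
    flatten [seq [seq rcons w k | k <- iota 0 (c w)] | w <- gen c m']
  else [:: [::]].

(** Degree in the undirected tree: children plus the parent edge (if not root). *)
Definition deg (c : seq nat -> nat) (z : seq nat) : nat :=
  c z + (z != [::]).

(** F(o,x) = #{ z in [o,x] \ {x} : deg z >= 3 }. *)
Definition Fox (c : seq nat -> nat) (x : seq nat) : nat :=
  count (fun i => 3 <= deg c (take i x)) (iota 0 (size x)).

Definition minF (c : seq nat -> nat) (m : nat) : nat :=
  \big[minn/Fox c (head [::] (gen c m))]_(x <- gen c m) Fox c x.

Definition min_children (c : seq nat -> nat) (d : nat) : Prop :=
  (exists w, vertex c w /\ c w = d) /\ (forall w, vertex c w -> d <= c w).

Definition ceil_div (a b : nat) : nat := (a + b.-1) %/ b.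

(** F_n(m) (an integer, possibly negative). *)
Definition Fn (c : seq nat -> nat) (d n m : nat) : int :=
  if d == 1 then (Posz (minF c m) - Posz n)%R
  else (Posz m - Posz (ceil_div n d.-1))%R.

(** * The TASEP jump chain with an arbitrary insertion rule
   A state is the sequence of the positions of the particles that have
   entered so far, the i-th entry being the position of the i-th particle to
   enter.  A history is the sequence of states visited so far (the last one
   being the current state).  The insertion rule is a (history dependent,
   possibly randomised) policy [pol : history -> R], the conditional
   probability that the next event is the insertion of a particle at the
   root; it is only used when insertion is possible (root empty and fewer
   than [n] particles inserted).  Otherwise the next event is a TASEP jump of
   a particle from [x] to an empty child [y], chosen with probability
   proportional to [r x y]. *)

Section Chain.
Local Open Scope ring_scope.
Variable R : realType.
Variables (c : seq nat -> nat) (r : seq nat -> nat -> R) (n : nat)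
  (pol : seq (seq (seq nat)) -> R).

Definition state := seq (seq nat).

Definition moves (s : state) : seq (R * state) :=
  flatten [seq
    [seq (r (nth [::] s i) k, set_nth [::] s i (rcons (nth [::] s i) k))
       | k <- iota 0 (c (nth [::] s i)) & rcons (nth [::] s i) k \notin s]
    | i <- iota 0 (size s)].

Definition can_insert (s : state) : bool := ((size s < n)%N) && ([::] \notin s).

Definition succs (h : seq state) : seq (R * state) :=
  let s := last [::] h in
  let pins := if can_insert s then pol h else 0 in
  let mv := moves s in
  let lam := \sum_(e <- mv) e.1 in
  (pins, rcons s [::]) ::
  (if lam == 0 then [:: (1 - pins, s)]
   else [seq ((1 - pins) * e.1 / lam, e.2) | e <- mv]).

Fixpoint prob (N : nat) (h : seq state) (E : state -> bool) : R :=
  if N is N'.+1 then \sum_(e <- succs h) e.1 * prob N' (rcons h e.2) E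
  else (E (last [::] h))%:R.

End Chain.

(** The generation-m sites z^m_i of all particles having reached generation m
    are pairwise distinct. *)
Definition distinct_at (m : nat) (s : seq (seq nat)) : bool :=
  all (fun i => all (fun j =>
        (i != j) ==> (m <= size (nth [::] s i)) ==> (m <= size (nth [::] s j)) ==>
        (take m (nth [::] s i) != take m (nth [::] s j)))
      (iota 0 (size s))) (iota 0 (size s)).

(* Main.v *)
Require Import Defs.
From HB Require Import structures.
From mathcomp Require Import all_boot all_order all_algebra ring.
From mathcomp Require Import reals.
Import Order.TTheory GRing.Theory Num.Theory.

Lemma prefix_cmp (x y w : seq nat) : prefix x w -> prefix y w -> prefix x y || prefix y x.
Proof.
rewrite !prefixE => /eqP hx /eqP hy.
case: (leqP (size x) (size y)) => h.
  apply/orP; left; apply/eqP.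
  by rewrite -[in RHS]hx -[y in take _ y]hy take_takel.
apply/orP; right; apply/eqP.
by rewrite -[in RHS]hy -[x in take _ x]hx take_takel // ltnW.
Qed.

Lemma prefix_rconsE (z w : seq nat) k : prefix z (rcons w k) -> prefix z w || (z == rcons w k).
Proof.
rewrite !prefixE => /eqP h.
case: (ltnP (size z) (size w).+1) => hs.
  by apply/orP; left; apply/eqP; rewrite -[in RHS]h -cats1 takel_cat.
by apply/orP; right; apply/eqP; rewrite -[in LHS]h take_oversize // size_rcons.
Qed.

Lemma prefix_take_ext (z z' : seq nat) m : prefix z z' -> m <= size z -> take m z' = take m z.
Proof. by rewrite prefixE => /eqP h hm; rewrite -[in RHS]h take_takel. Qed.

Lemma prefix_child (z p : seq nat) k : prefix z p -> size z < size p ->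
  prefix (rcons z k) p = (k == nth 0 p (size z)).
Proof.
rewrite !prefixE size_rcons => /eqP h hs.
rewrite (take_nth 0 hs) h.
by apply/eqP/eqP => [/rcons_inj [] ->|->].
Qed.

Section Inv.
Variables (c : seq nat -> nat) (n : nat).

Lemma vertexP w : reflect (forall i, i < size w -> nth 0 w i < c (take i w)) (vertex c w).
Proof.
apply: (iffP allP) => H i.
  by move=> hi; apply: H; rewrite mem_iota.
by rewrite mem_iota => /andP[_ hi]; apply: H.
Qed.

Lemma vertex_rcons w k : vertex c w -> k < c w -> vertex c (rcons w k).
Proof.
move=> /vertexP hw hk; apply/vertexP => i; rewrite size_rcons ltnS leq_eqVlt.
case/orP => [/eqP ->|hi].
  by rewrite nth_rcons ltnn eqxx -cats1 take_size_cat.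
by rewrite nth_rcons hi -cats1 takel_cat; [apply: hw | apply: ltnW].
Qed.

Lemma vertex_nth w i : vertex c w -> i < size w -> nth 0 w i < c (take i w).
Proof. by move/vertexP; apply. Qed.

Definition ordered (s : seq (seq nat)) :=
  forall a b, a < b < size s -> ~~ prefix (nth [::] s a) (nth [::] s b).

Definition Inv (s : seq (seq nat)) : Prop :=
  [/\ size s <= n, all (vertex c) s, uniq s & ordered s].

Lemma Inv_ins s : Inv s -> can_insert n s -> Inv (rcons s [::]).
Proof.
case=> hn hv hu ho /andP[hsn h0]; split.
- by rewrite size_rcons.
- by rewrite all_rcons hv andbT.
- by rewrite rcons_uniq h0.
move=> a b; rewrite size_rcons ltnS => /andP[hab hb].
have ha : a < size s by apply: leq_trans hb.
rewrite !nth_rcons ha; move: hb; rewrite leq_eqVlt => /orP[/eqP hb|hb].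
  rewrite hb ltnn eqxx prefixs0; apply/eqP => e.
  by move: h0; rewrite -e mem_nth.
rewrite hb; apply: ho; by rewrite hab hb.
Qed.

Lemma Inv_move (s : seq (seq nat)) (a k : nat) : Inv s -> a < size s -> k < c (nth [::] s a) ->
  rcons (nth [::] s a) k \notin s ->
  Inv (set_nth [::] s a (rcons (nth [::] s a) k)).
Proof.
case=> hn hv hu ho ha hk hnot.
have hsz : size (set_nth [::] s a (rcons (nth [::] s a) k)) = size s by rewrite size_set_nth; apply/maxn_idPr.
have hvw : vertex c (nth [::] s a) by apply: (allP hv); apply: mem_nth.
split.
- by rewrite hsz.
- apply/(all_nthP [::]) => i hi'.
  have hi : i < size s by move: hi'; rewrite hsz.
  rewrite nth_set_nth /=.
  case: ifP => _; first exact: vertex_rcons.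
  by apply: (allP hv); apply: mem_nth.
- apply/(uniqP [::]) => i j hi' hj'.
  have hi : i < size s by move: hi'; rewrite inE hsz.
  have hj : j < size s by move: hj'; rewrite inE hsz.
  rewrite !nth_set_nth /=.
  case: ifP => hia; case: ifP => hja.
  + by rewrite (eqP hia) (eqP hja).
  + by move=> e; case/negP: hnot; rewrite e mem_nth.
  + by move=> e; case/negP: hnot; rewrite -e mem_nth.
  + by apply: (uniqP [::] hu).
move=> i j /andP[hij hj'].
have hj : j < size s by move: hj'; rewrite hsz.
have hi : i < size s by apply: ltn_trans hj.
rewrite !nth_set_nth /=.
case: ifP => hia; case: ifP => hja.
- by move: hij; rewrite (eqP hia) (eqP hja) ltnn.
- apply/negP => hp; move: (ho a j); rewrite -(eqP hia) hij hj => /(_ isT) /negP; apply.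
  by rewrite (eqP hia); apply: prefix_trans hp; apply: prefix_rcons.
- apply/negP => /prefix_rconsE /orP[hp|/eqP e].
    by move: (ho i a); rewrite -(eqP hja) hij hj => /(_ isT); rewrite (eqP hja) hp.
  by move: hnot; rewrite -e mem_nth.
- by apply: ho; rewrite hij hj.
Qed.

Lemma Inv_init : Inv [::].
Proof. by split => // a b; rewrite ltn0 andbF. Qed.

End Inv.

Section Sums.
Local Open Scope ring_scope.
Variables (R : realType) (c : seq nat -> nat) (r : seq nat -> nat -> R) (n : nat)
  (pol : seq (seq (seq nat)) -> R).
Hypothesis Hr : forall w k, vertex c w -> (k < c w)%N -> 0 < r w k.
Hypothesis Hpol : forall h, 0 <= pol h <= 1.

Lemma ler_sum_in (I : eqType) (L : seq I) (P : pred I) (F G : I -> R) :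
  (forall i, i \in L -> P i -> F i <= G i) ->
  \sum_(i <- L | P i) F i <= \sum_(i <- L | P i) G i.
Proof.
move=> H; rewrite big_seq_cond [X in _ <= X]big_seq_cond.
by apply: ler_sum => i /andP[]; apply: H.
Qed.

Definition mvs (F : seq (seq nat) -> R) (s : seq (seq nat)) : R :=
  \sum_(a <- iota 0 (size s))
    \sum_(k <- iota 0 (c (nth [::] s a)) | rcons (nth [::] s a) k \notin s)
     r (nth [::] s a) k * F (set_nth [::] s a (rcons (nth [::] s a) k)).

Lemma sum_moves (G : R * seq (seq nat) -> R) (s : seq (seq nat)) :
  \sum_(e <- moves c r s) G e =
  \sum_(a <- iota 0 (size s))
    \sum_(k <- iota 0 (c (nth [::] s a)) | rcons (nth [::] s a) k \notin s)
      G (r (nth [::] s a) k, set_nth [::] s a (rcons (nth [::] s a) k)).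
Proof.
rewrite /moves big_flatten big_map; apply: eq_bigr => a _.
by rewrite big_map big_filter.
Qed.

Definition lamb (s : seq (seq nat)) := \sum_(e <- moves c r s) e.1.

Lemma lamE s : lamb s = mvs (fun _ => 1) s.
Proof.
rewrite /lamb sum_moves /mvs; apply: eq_bigr => a _; apply: eq_bigr => k _.
by rewrite mulr1.
Qed.

Definition pins (h : seq (seq (seq nat))) :=
  if can_insert n (last [::] h) then pol h else 0.

Lemma succs_formula h (F : seq (seq nat) -> R) :
  \sum_(e <- succs c r n pol h) e.1 * F e.2 =
  pins h * F (rcons (last [::] h) [::]) +
  (if lamb (last [::] h) == 0 then (1 - pins h) * F (last [::] h)
   else (1 - pins h) / lamb (last [::] h) * mvs F (last [::] h)).
Proof.
rewrite /succs big_cons /= -/(lamb _) -/(pins _).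
case: ifP => _; first by rewrite big_seq1.
rewrite big_map sum_moves /mvs mulr_sumr; congr (_ + _); apply: eq_bigr => a _.
rewrite mulr_sumr; apply: eq_bigr => k _ /=.
ring.
Qed.

Lemma pins01 h : 0 <= pins h <= 1.
Proof. by rewrite /pins; case: ifP => _ //; rewrite lexx ler01. Qed.

Lemma pins_ins h : pins h != 0 -> can_insert n (last [::] h).
Proof. by rewrite /pins; case: ifP => //; rewrite eqxx. Qed.

Lemma r_pos s a k : Inv c n s -> a \in iota 0 (size s) ->
  k \in iota 0 (c (nth [::] s a)) -> 0 < r (nth [::] s a) k.
Proof.
case=> _ hv _ _; rewrite !mem_iota !add0n => /andP[_ ha] /andP[_ hk].
by apply: Hr => //; apply: (allP hv); apply: mem_nth.
Qed.

Lemma mvs_mono s F1 F2 : Inv c n s ->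
  (forall s', Inv c n s' -> F1 s' <= F2 s') -> mvs F1 s <= mvs F2 s.
Proof.
move=> hI H; apply: ler_sum_in => a ha _; apply: ler_sum_in => k hk hnot.
apply: ler_wpM2l; first exact/ltW/r_pos.
apply: H; apply: Inv_move => //.
- by move: ha; rewrite mem_iota.
- by move: hk; rewrite mem_iota.
Qed.

Lemma mvs0 s : mvs (fun _ => 0) s = 0.
Proof. by rewrite /mvs big1 // => a _; rewrite big1 // => k _; rewrite mulr0. Qed.

Lemma lamb_ge0 s : Inv c n s -> 0 <= lamb s.
Proof. by move=> hI; rewrite lamE -(mvs0 s); apply: mvs_mono. Qed.

Lemma succ_mono h F1 F2 : Inv c n (last [::] h) ->
  (forall s', Inv c n s' -> F1 s' <= F2 s') ->
  \sum_(e <- succs c r n pol h) e.1 * F1 e.2 <= \sum_(e <- succs c r n pol h) e.1 * F2 e.2.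
Proof.
move=> hI H; rewrite !succs_formula.
have /andP[p0 p1] := pins01 h.
apply: lerD.
  have [->|hp] := eqVneq (pins h) 0; first by rewrite !mul0r.
  by apply: ler_wpM2l => //; apply: H; apply: Inv_ins => //; apply: pins_ins.
case: ifP => hl.
  by apply: ler_wpM2l; [rewrite subr_ge0|apply: H].
apply: ler_wpM2l; last exact: mvs_mono.
by apply: divr_ge0; [rewrite subr_ge0|apply: lamb_ge0].
Qed.

Lemma succ_total h : Inv c n (last [::] h) ->
  \sum_(e <- succs c r n pol h) e.1 * 1 = 1.
Proof.
move=> hI; rewrite (succs_formula h (fun _ => 1)) -lamE.
case: ifP => hl; first by rewrite !mulr1 addrC subrK.
rewrite mulr1 -mulrA mulVf ?hl // mulr1.
by rewrite addrC subrK.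
Qed.

Lemma prob_S N h E : prob c r n pol N.+1 h E =
  \sum_(e <- succs c r n pol h) e.1 * prob c r n pol N (rcons h e.2) E.
Proof. by []. Qed.

Lemma prob_false N h E : (forall s, E s = false) -> prob c r n pol N h E = 0.
Proof.
move=> hE; elim: N h => [|N IH] h /=; first by rewrite hE.
by rewrite big1 // => e _; rewrite IH mulr0.
Qed.

Lemma prob_super (Phi : seq (seq nat) -> R) (E : seq (seq nat) -> bool) :
  (forall s, Inv c n s -> (E s)%:R <= Phi s) ->
  (forall h, Inv c n (last [::] h) ->
     \sum_(e <- succs c r n pol h) e.1 * Phi e.2 <= Phi (last [::] h)) ->
  forall N h, Inv c n (last [::] h) -> prob c r n pol N h E <= Phi (last [::] h).
Proof.
move=> hb hs; elim=> [|N IH] h hI /=; first exact: hb.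
apply: le_trans (hs h hI).
apply: (@succ_mono h (fun s' => prob c r n pol N (rcons h s') E)) => // s' hs'.
by move: (IH (rcons h s')); rewrite last_rcons; apply.
Qed.

Lemma prob_union (k : nat) (E : seq (seq nat) -> bool) (B : 'I_k -> 'I_k -> seq (seq nat) -> bool) :
  (forall s, Inv c n s -> 1 - (E s)%:R <= \sum_i \sum_j (B i j s)%:R :> R) ->
  forall N h, Inv c n (last [::] h) ->
  1 - prob c r n pol N h E <= \sum_i \sum_j prob c r n pol N h (B i j).
Proof.
move=> hb; elim=> [|N IH] h hI /=; first exact: hb.
rewrite -{1}(@succ_total h hI) -sumrB.
rewrite (eq_bigr (fun e => e.1 * (1 - prob c r n pol N (rcons h e.2) E))); last by move=> e _; rewrite mulrBr.
apply: le_trans.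
  apply: (@succ_mono h (fun s' => 1 - prob c r n pol N (rcons h s') E)
     (fun s' => \sum_i \sum_j prob c r n pol N (rcons h s') (B i j))) => // s' hs'.
  by move: (IH (rcons h s')); rewrite last_rcons; apply.
rewrite le_eqVlt; apply/orP; left; apply/eqP.
rewrite (eq_bigr (fun e => \sum_i \sum_j e.1 * prob c r n pol N (rcons h e.2) (B i j))); last first.
  by move=> e _; rewrite mulr_sumr; apply: eq_bigr => i _; rewrite mulr_sumr.
rewrite exchange_big /=; apply: eq_bigr => i _.
by rewrite exchange_big.
Qed.

End Sums.

Lemma prefix_take_le (x y : seq nat) m : prefix x y -> size x <= m -> prefix x (take m y).
Proof.
rewrite !prefixE => /eqP h hm; apply/eqP.
by rewrite take_takel.
Qed.

Lemma prefix_neq_size (z p : seq nat) : prefix z p -> z != p -> size z < size p.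
Proof.
move=> hp hne; rewrite ltn_neqAle size_prefix // andbT.
apply/negP => /eqP e; move: hp hne; rewrite prefixE e take_size => /eqP ->.
by rewrite eqxx.
Qed.

Lemma count_set_nth_le (T : Type) (P : pred T) (x0 : T) s a v :
  a < size s -> P v <= P (nth x0 s a) -> count P (set_nth x0 s a v) <= count P s.
Proof.
elim: s a => [|x s IH] [|a] //= ha hP.
  by rewrite leq_add2r.
by rewrite leq_add2l; apply: IH.
Qed.

Lemma count_add_le (T : Type) (P1 P2 P3 : pred T) s :
  (forall x, P1 x + P2 x <= P3 x) -> count P1 s + count P2 s <= count P3 s.
Proof.
move=> H; elim: s => [|x s IH] //=.
rewrite addnACA; apply: leq_add => //.
Qed.

Arguments prefix_take_ext {z z' m}.
Arguments prefix_take_le {x y m}.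
Arguments prefix_cmp {x y w}.
Arguments prefix_child {z p} k.
Arguments prefix_neq_size {z p}.


Definition strict (z w : seq nat) := prefix z w && (z != w).
Definition avail (z : seq nat) (s : seq (seq nat)) := count (strict z) s.

Lemma strict_child (z w : seq nat) k : strict (rcons z k) w -> strict z w.
Proof.
rewrite /strict => /andP[h1 h2]; apply/andP; split.
  exact: prefix_trans (prefix_rcons z k) h1.
by apply/eqP => e; move: (size_prefix h1); rewrite -e size_rcons ltnn.
Qed.

Lemma avail_others (s : seq (seq nat)) (z : seq nat) (kp cz : nat) : kp < cz ->
  (forall k, k < cz -> k != kp -> rcons z k \in s) ->
  avail (rcons z kp) s + cz.-1 <= avail z s.
Proof.
move=> hkp H.
pose O := [seq rcons z k | k <- iota 0 cz & k != kp].
have hO : size O = cz.-1.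
  rewrite size_map size_filter.
  have := count_predC (pred1 kp) (iota 0 cz).
  rewrite count_uniq_mem ?iota_uniq // mem_iota leq0n add0n hkp size_iota => e.
  by rewrite -[in RHS]e add1n.
have hsub : size O <= count (fun w => w \in O) s.
  rewrite -size_filter; apply: uniq_leq_size.
    by rewrite map_inj_uniq ?filter_uniq ?iota_uniq //; apply: rcons_injr.
  move=> x hx; rewrite mem_filter hx /=.
  move/mapP: hx => [k]; rewrite mem_filter => /andP[hne hk] ->.
  by apply: H => //; move: hk; rewrite mem_iota add0n.
have hpt w : strict (rcons z kp) w + (w \in O) <= strict z w.
  case hw: (w \in O).
    move/mapP: hw => [k]; rewrite mem_filter => /andP[hne _] ->.
    have -> : strict (rcons z kp) (rcons z k) = false.
      rewrite /strict; apply/negP => /andP[h _]; move: h.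
      rewrite prefixE !size_rcons -(size_rcons z k) take_size => /eqP e.
      by move: hne; rewrite (rcons_injr z e) eqxx.
    have -> : strict z (rcons z k) = true.
      rewrite /strict prefix_rcons /=; apply/eqP => e.
      by have := congr1 size e; rewrite size_rcons => /eqP; rewrite eqn_leq ltnn andbF.
    by [].
  rewrite addn0; case: (boolP (strict (rcons z kp) w)) => // h.
  by rewrite (strict_child _ _ _ h).
apply: leq_trans _ (@count_add_le _ _ _ _ s hpt).
by rewrite /avail leq_add2l -hO.
Qed.

Section Pot.
Variables (R : realType) (c : seq nat -> nat) (r : seq nat -> nat -> R) (n : nat)
  (pol : seq (seq (seq nat)) -> R) (m : nat) (eps : R) (i j D : nat) (G : seq nat -> nat).
Hypothesis Hr : forall w k, vertex c w -> k < c w -> (0 < r w k)%R.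
Hypothesis Hpol : forall h, (0 <= pol h <= 1)%R.
Hypothesis Heps : (0 < eps)%R.
Hypothesis HUE : forall w k k', vertex c w -> k < c w -> k' < c w -> (eps * r w k' <= r w k)%R.
Hypothesis hij : i < j.
Hypothesis HD : 0 < D.
Hypothesis HDc : forall z, vertex c z -> 1 < c z -> D < c z.
Hypothesis HG1 : forall z k, vertex c z -> size z < m -> k < c z -> G z <= (1 < c z) + G (rcons z k).
Hypothesis HG2 : forall w, vertex c w -> size w = m -> G w = 0.

Definition badp (z p : seq nat) := [&& m <= size z, m <= size p & take m z == take m p].
Definition C2 (s : seq (seq nat)) :=
  [&& ~~ badp (nth [::] s j) (nth [::] s i), prefix (nth [::] s j) (nth [::] s i) &
      size (nth [::] s j) < m].

Local Open Scope ring_scope.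
Definition tt := 1 + eps.
Definition phi (a b : nat) : R := tt ^+ a / tt ^+ b.

Definition Phi (s : seq (seq nat)) : R :=
  if (size s <= j)%N then phi (j %/ D) (G [::])
  else if badp (nth [::] s j) (nth [::] s i) then 1
  else if prefix (nth [::] s j) (nth [::] s i) && (size (nth [::] s j) < m)%N
       then phi (avail (nth [::] s j) s %/ D) (G (nth [::] s j))
  else 0.

Lemma tt_gt0 : 0 < tt. Proof. by rewrite /tt; apply: addr_gt0. Qed.
Lemma tt_ge1 : 1 <= tt. Proof. by rewrite /tt lerDl ltW. Qed.

Lemma phi_ge0 a b : 0 <= phi a b.
Proof. by rewrite /phi divr_ge0 // exprn_ge0 // ltW // tt_gt0. Qed.

Lemma phi00 : phi 0 0 = 1.
Proof. by rewrite /phi !expr0 divr1. Qed.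

Lemma phi_le a b a' b' : (a + b' <= a' + b)%N -> phi a b <= phi a' b'.
Proof.
move=> h; rewrite /phi.
have hp k : 0 < tt ^+ k by rewrite exprn_gt0 // tt_gt0.
rewrite ler_pdivrMr // mulrAC ler_pdivlMr // -!exprD.
by apply: ler_weXn2l => //; apply: tt_ge1.
Qed.

Lemma phiS a b : tt * phi a b = phi a.+1 b.
Proof. by rewrite /phi exprS mulrA. Qed.

Lemma Phi_ge0 s : 0 <= Phi s.
Proof.
rewrite /Phi; case: ifP => _; first exact: phi_ge0.
case: ifP => _ //; case: ifP => _ //; exact: phi_ge0.
Qed.


Lemma nth_sn_j (s : seq (seq nat)) (v : seq nat) : nth [::] (set_nth [::] s j v) j = v.
Proof. by rewrite nth_set_nth /= eqxx. Qed.

Lemma nth_sn_i (s : seq (seq nat)) (v : seq nat) : nth [::] (set_nth [::] s j v) i = nth [::] s i.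
Proof. by rewrite nth_set_nth /= ltn_eqF. Qed.

Lemma size_sn (s : seq (seq nat)) a v : (a < size s)%N -> size (set_nth [::] s a v) = size s.
Proof. by move=> ha; rewrite size_set_nth; apply/maxn_idPr. Qed.

Lemma Phi_ext (s s' : seq (seq nat)) : Inv c n s -> (j < size s)%N -> (size s <= size s')%N ->
  (forall b, (b < size s)%N -> prefix (nth [::] s b) (nth [::] s' b)) -> ~~ C2 s ->
  Phi s' <= Phi s.
Proof.
case=> _ _ _ ho hj hs hpre hC.
have hi : (i < size s)%N by apply: ltn_trans hij hj.
have hzz := hpre j hj; have hpp := hpre i hi.
have hj' : (j < size s')%N by apply: leq_trans hs.
move: hC; rewrite /Phi /C2 (leqNgt (size s) j) hj (leqNgt (size s') j) hj' /=.
move: hzz hpp.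
move: (nth [::] s j) (nth [::] s i) (nth [::] s' j) (nth [::] s' i) (ho i j) => z p z' p' hpz0 hzz hpp hC.
have hpz : ~~ prefix p z by apply: hpz0; rewrite hij hj.
case hb: (badp z p).
  move/and3P: hb => [h1 h2 /eqP h3].
  have -> : badp z' p'.
    apply/and3P; split.
    - exact: leq_trans h1 (size_prefix hzz).
    - exact: leq_trans h2 (size_prefix hpp).
    - by rewrite (prefix_take_ext hzz h1) (prefix_take_ext hpp h2) h3.
  by [].
have hzp : ~~ prefix z p.
  apply/negP => hzp; move: hC; rewrite hb hzp /= -leqNgt => hmz.
  move/negP: hb; apply; apply/and3P; split => //.
  - exact: leq_trans hmz (size_prefix hzp).
  - by rewrite (prefix_take_ext hzp hmz).
rewrite (negbTE hzp) /=.
have -> : prefix z' p' = false.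
  apply/negP => h; have := prefix_cmp (prefix_trans hzz h) hpp.
  by rewrite (negbTE hzp) (negbTE hpz).
have -> : badp z' p' = false.
  apply/negP => /and3P[h1 h2 /eqP h3].
  case: (leqP m (size z)) => hmz.
    case: (leqP m (size p)) => hmp.
      move/negP: hb; apply; apply/and3P; split => //.
      by rewrite -(prefix_take_ext hzz hmz) -(prefix_take_ext hpp hmp) h3.
    have h4 : prefix p z'.
      apply: prefix_trans (prefix_take_le hpp (ltnW hmp)) _.
      by rewrite -h3; apply: prefix_take.
    by have := prefix_cmp h4 hzz; rewrite (negbTE hzp) (negbTE hpz).
  have h4 : prefix z p'.
    apply: prefix_trans (prefix_take_le hzz (ltnW hmz)) _.
    by rewrite h3; apply: prefix_take.
  by have := prefix_cmp h4 hpp; rewrite (negbTE hzp) (negbTE hpz).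
by [].
Qed.

Lemma Phi_same (s s' : seq (seq nat)) : (j < size s)%N -> C2 s -> (j < size s')%N ->
  nth [::] s' j = nth [::] s j -> prefix (nth [::] s i) (nth [::] s' i) ->
  (avail (nth [::] s j) s' <= avail (nth [::] s j) s)%N -> Phi s' <= Phi s.
Proof.
move=> hj /and3P[hb hzp hm] hj' ez hpp hav.
rewrite /Phi (leqNgt (size s) j) hj (leqNgt (size s') j) hj' /= ez (negbTE hb) hzp.
have -> : badp (nth [::] s j) (nth [::] s' i) = false.
  by apply/negP => /and3P[h1 _ _]; move: hm; rewrite ltnNge h1.
rewrite (prefix_trans hzp hpp) hm /=.
by apply: phi_le; rewrite leq_add2r leq_div2r.
Qed.

Lemma strict_nil (z : seq nat) : strict z [::] = false.
Proof. by rewrite /strict prefixs0; case: eqP => // ->. Qed.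

Lemma Phi_ins (s : seq (seq nat)) : Inv c n s -> can_insert n s -> Phi (rcons s [::]) <= Phi s.
Proof.
move=> hI /andP[hsn h0].
have hav z : (avail z (rcons s [::]) <= avail z s)%N.
  rewrite /avail -cats1 count_cat (_ : count (strict z) [:: [::]] = 0) ?addn0 //.
  by rewrite /= strict_nil.
case: (ltngtP (size s) j) => hsj.
- by rewrite /Phi size_rcons hsj (ltnW hsj).
- case hC: (C2 s).
    apply: Phi_same => //; first by rewrite size_rcons ltnW.
      by rewrite nth_rcons hsj.
    by rewrite nth_rcons (ltn_trans hij hsj) prefix_refl.
  apply: Phi_ext => //; first by rewrite size_rcons leqnSn.
    by move=> b hb; rewrite nth_rcons hb prefix_refl.
  by rewrite hC.
- rewrite /Phi !nth_rcons size_rcons hsj leqnn ltnn eqxx hij.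
  case hb: (badp [::] _).
    move/and3P: hb => [h1 _ _]; move: h1; rewrite leqn0 => /eqP hm0.
    rewrite HG2 // -phi00; apply: phi_le; by rewrite addn0.
  rewrite prefix0s /=; case: ifP => _; last exact: phi_ge0.
  apply: phi_le; rewrite leq_add2r leq_div2r //.
  by apply: leq_trans (hav _) _; rewrite /avail -hsj count_size.
Qed.

Lemma sum_ge_term (I : eqType) (L : seq I) (P : pred I) (F : I -> R) x :
  uniq L -> x \in L -> P x -> (forall k, k \in L -> P k -> 0 <= F k) ->
  F x <= \sum_(k <- L | P k) F k.
Proof.
move=> hu hx hP H; rewrite big_mkcond (bigD1_seq x) //= hP lerDl.
rewrite big_seq_cond; apply: sumr_ge0 => k /andP[hk _].
by case: ifP => // hPk; apply: H.
Qed.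

Lemma key_j (s : seq (seq nat)) : Inv c n s -> (j < size s)%N -> C2 s ->
  \sum_(k <- iota 0 (c (nth [::] s j)) | rcons (nth [::] s j) k \notin s)
     r (nth [::] s j) k * Phi (set_nth [::] s j (rcons (nth [::] s j) k)) <=
  \sum_(k <- iota 0 (c (nth [::] s j)) | rcons (nth [::] s j) k \notin s)
     r (nth [::] s j) k * Phi s.
Proof.
move=> hI hj hC; have hC' := hC; move/and3P: hC' => [hb hzp hm].
case: hI => hsn hv hu ho.
have hi : (i < size s)%N by apply: ltn_trans hij hj.
have hPhi : Phi s = phi (avail (nth [::] s j) s %/ D) (G (nth [::] s j)).
  by rewrite /Phi (leqNgt (size s) j) hj /= (negbTE hb) hzp hm.
move: hb hzp hm hPhi (ho i j).
move Ez : (nth [::] s j) => z; move Ep : (nth [::] s i) => p => hb hzp hm hPhi hpz0.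
have hvz : vertex c z by rewrite -Ez; apply: (allP hv); apply: mem_nth.
have hvp : vertex c p by rewrite -Ep; apply: (allP hv); apply: mem_nth.
have hzpne : z != p.
  apply/eqP => e; move: (hpz0); rewrite hij hj => /(_ isT).
  by rewrite e prefix_refl.
have hzlt := prefix_neq_size hzp hzpne.
have hkp : (nth 0 p (size z) < c z)%N.
  have := vertex_nth _ _ _ hvp hzlt.
  by move: hzp; rewrite prefixE => /eqP ->.
have hvy := vertex_rcons _ _ _ hvz hkp.
have hyp : prefix (rcons z (nth 0 p (size z))) p by rewrite prefix_child // eqxx.
have hother k : k != nth 0 p (size z) -> Phi (set_nth [::] s j (rcons z k)) = 0.
  move=> hk.
  rewrite /Phi size_sn // (leqNgt (size s) j) hj /= nth_sn_j nth_sn_i Ep.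
  have hpk : prefix (rcons z k) p = false by rewrite prefix_child // (negbTE hk).
  have -> : badp (rcons z k) p = false.
    apply/negP => /and3P[h1 h2 /eqP h3].
    have hsz : size (rcons z k) = m by apply/eqP; rewrite eqn_leq h1 size_rcons hm.
    by move: hpk; rewrite prefixE hsz -h3 take_oversize ?hsz // eqxx.
  by rewrite hpk.
have hy : Phi (set_nth [::] s j (rcons z (nth 0 p (size z)))) <=
          phi (avail (rcons z (nth 0 p (size z))) s %/ D) (G (rcons z (nth 0 p (size z)))).
  rewrite /Phi size_sn // (leqNgt (size s) j) hj /= nth_sn_j nth_sn_i Ep.
  case hby: (badp _ p).
    move/and3P: hby => [h1 _ _].
    have hsz : size (rcons z (nth 0 p (size z))) = m.
      by apply/eqP; rewrite eqn_leq h1 size_rcons hm.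
    rewrite HG2 // -phi00; apply: phi_le; by rewrite add0n leq0n.
  rewrite hyp /=; case: ifP => _; last exact: phi_ge0.
  apply: phi_le; rewrite leq_add2r leq_div2r //.
  apply: count_set_nth_le => //.
  by rewrite Ez /strict eqxx andbF.
have havy : (avail (rcons z (nth 0 p (size z))) s <= avail z s)%N.
  by apply: sub_count => w; apply: strict_child.
have hr k : k \in iota 0 (c z) -> 0 <= r z k.
  by rewrite mem_iota add0n => /andP[_ hk]; apply/ltW/Hr.
have hkpi : nth 0 p (size z) \in iota 0 (c z) by rewrite mem_iota add0n hkp.
move: hy havy hother hkp hkpi hyp hvy.
move: (nth 0 p (size z)) => kp hy havy hother hkp hkpi hyp hvy.
have RHSge0 : 0 <= \sum_(k <- iota 0 (c z) | rcons z k \notin s) r z k * Phi s.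
  rewrite big_seq_cond; apply: sumr_ge0 => k /andP[hk _].
  by apply: mulr_ge0; [apply: hr|apply: Phi_ge0].
have LHSeq : \sum_(k <- iota 0 (c z) | rcons z k \notin s)
     r z k * Phi (set_nth [::] s j (rcons z k)) =
   (if rcons z kp \notin s then r z kp * Phi (set_nth [::] s j (rcons z kp)) else 0).
  rewrite big_mkcond (bigD1_seq kp) ?iota_uniq //= big1 ?addr0 //.
  move=> k hk; rewrite hother //; case: ifP => _ //; by rewrite mulr0.
have RHSeq : \sum_(k <- iota 0 (c z) | rcons z k \notin s) r z k * Phi s =
   (if rcons z kp \notin s then r z kp * Phi s else 0) +
   \sum_(k <- iota 0 (c z) | k != kp) (if rcons z k \notin s then r z k * Phi s else 0).
  by rewrite big_mkcond (bigD1_seq kp) ?iota_uniq.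
rewrite LHSeq; case hys: (rcons z kp \notin s); last by [].
rewrite RHSeq hys.
set S := \sum_(k <- _ | _) _.
have hS0 : 0 <= S.
  rewrite /S big_seq_cond; apply: sumr_ge0 => k /andP[hk _].
  by case: ifP => // _; apply: mulr_ge0; [apply: hr|apply: Phi_ge0].
have hav := avail_others.
case: (boolP (has (fun k => (k != kp) && (rcons z k \notin s)) (iota 0 (c z)))) => hhas.
  case/hasP: hhas => k' hk' /andP[hne hfree].
  have hSk : r z k' * Phi s <= S.
    have := @sum_ge_term _ (iota 0 (c z)) (fun k => k != kp)
       (fun k => if rcons z k \notin s then r z k * Phi s else 0) k' (iota_uniq _ _) hk' hne.
    rewrite hfree; apply => k hk _.
    by case: ifP => // _; apply: mulr_ge0; [apply: hr|apply: Phi_ge0].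
  have hk'lt : (k' < c z)%N by move: hk'; rewrite mem_iota add0n.
  have hUE := HUE z k' kp hvz hk'lt hkp.
  have hPy : Phi (set_nth [::] s j (rcons z kp)) <= tt * Phi s.
    apply: le_trans hy _; rewrite hPhi phiS; apply: phi_le.
    have h1 := HG1 z kp hvz hm hkp.
    have h2 : (avail (rcons z kp) s %/ D <= avail z s %/ D)%N by apply: leq_div2r.
    have h3 : ((1 < c z) <= 1)%N by apply: leq_b1.
    move: h1 h2 h3; move: (avail (rcons z kp) s %/ D)%N (avail z s %/ D)%N (G z) (G (rcons z kp)) (nat_of_bool (1 < c z)%N).
    move=> a1 a2 g1 g2 b h1 h2 h3.
    apply: leq_trans (leq_add h2 (leq_trans h1 (leq_add h3 (leqnn g2)))) _.
    by rewrite addnA addn1.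
  apply: le_trans (ler_wpM2l (hr _ hkpi) hPy) _.
  rewrite /tt mulrDl mul1r mulrDr lerD2l.
  apply: le_trans hSk; rewrite mulrA; apply: ler_wpM2r; first exact: Phi_ge0.
  by rewrite mulrC.
have hall k : (k < c z)%N -> k != kp -> rcons z k \in s.
  move=> hk hne; move/hasPn: hhas => /(_ k); rewrite mem_iota add0n hk hne /= => /(_ isT).
  by rewrite negbK.
have hPy : Phi (set_nth [::] s j (rcons z kp)) <= Phi s.
  apply: le_trans hy _; rewrite hPhi; apply: phi_le.
  have h1 := HG1 z kp hvz hm hkp.
  case: (ltnP 1 (c z)) => hc.
    have h4 := avail_others _ _ _ _ hkp hall.
    have hDc := HDc z hvz hc.
    have h5 : (avail (rcons z kp) s + D <= avail z s)%N.
      apply: leq_trans h4; rewrite leq_add2l; by rewrite -ltnS prednK // (ltn_trans _ hc).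
    have h6 : (avail (rcons z kp) s %/ D + 1 <= avail z s %/ D)%N.
      by rewrite -(divnDMl _ _ HD) mul1n leq_div2r.
    move: h1 h6; rewrite hc.
    move: (avail (rcons z kp) s %/ D)%N (avail z s %/ D)%N (G z) (G (rcons z kp)).
    move=> a1 a2 g1 g2 h1 h6.
    by apply: leq_trans (leq_add (leqnn a1) h1) _; rewrite addnA leq_add2r.
  move: h1; rewrite ltnNge hc /= add0n => h1.
  by apply: leq_add; [apply: leq_div2r|].
apply: le_trans (ler_wpM2l (hr _ hkpi) hPy) _.
by rewrite lerDl.
Qed.

Lemma ext_move (s : seq (seq nat)) a k b : (a < size s)%N -> (b < size s)%N ->
  prefix (nth [::] s b) (nth [::] (set_nth [::] s a (rcons (nth [::] s a) k)) b).
Proof.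
move=> ha hb; rewrite nth_set_nth /=; case: eqP => [->|_].
  exact: prefix_rcons.
exact: prefix_refl.
Qed.

Lemma key_a (s : seq (seq nat)) a : Inv c n s -> a \in iota 0 (size s) ->
  \sum_(k <- iota 0 (c (nth [::] s a)) | rcons (nth [::] s a) k \notin s)
     r (nth [::] s a) k * Phi (set_nth [::] s a (rcons (nth [::] s a) k)) <=
  \sum_(k <- iota 0 (c (nth [::] s a)) | rcons (nth [::] s a) k \notin s)
     r (nth [::] s a) k * Phi s.
Proof.
move=> hI ha.
have ha' : (a < size s)%N by move: ha; rewrite mem_iota add0n.
have T : (forall k, k \in iota 0 (c (nth [::] s a)) -> rcons (nth [::] s a) k \notin s ->
    Phi (set_nth [::] s a (rcons (nth [::] s a) k)) <= Phi s) ->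
  \sum_(k <- iota 0 (c (nth [::] s a)) | rcons (nth [::] s a) k \notin s)
     r (nth [::] s a) k * Phi (set_nth [::] s a (rcons (nth [::] s a) k)) <=
  \sum_(k <- iota 0 (c (nth [::] s a)) | rcons (nth [::] s a) k \notin s)
     r (nth [::] s a) k * Phi s.
  move=> H; apply: ler_sum_in => k hk hfree.
  apply: ler_wpM2l; first exact/ltW/(r_pos R c r n Hr s a k hI ha hk).
  exact: H.
case: (eqVneq a j) => [ea|haj].
  subst a; case hC: (C2 s); first exact: key_j.
  apply: T => k hk hfree; apply: Phi_ext => //.
  - by rewrite size_sn.
  - by move=> b hb; apply: ext_move.
  - by rewrite hC.
apply: T => k hk hfree.
case: (leqP (size s) j) => hsj.
  by rewrite /Phi size_sn // hsj.
case hC: (C2 s).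
  apply: Phi_same => //.
  - by rewrite size_sn.
  - by rewrite nth_set_nth /= eq_sym (negbTE haj).
  - by apply: ext_move => //; apply: ltn_trans hij hsj.
  apply: count_set_nth_le => //.
  case: hI => _ _ hu _.
  case: (boolP (strict _ _)) => // h.
  suff -> : strict (nth [::] s j) (nth [::] s a) by [].
  move: h; rewrite /strict => /andP[h1 h2].
  case/orP: (prefix_rconsE _ _ _ h1) => [h3|h4].
    rewrite h3 /=; apply/eqP => e.
    by move: haj; rewrite -(nth_uniq [::] ha' hsj hu) e eqxx.
  by move: hfree; rewrite -(eqP h4) mem_nth.
apply: Phi_ext => //.
- by rewrite size_sn.
- by move=> b hb; apply: ext_move.
- by rewrite hC.
Qed.

Lemma key h : Inv c n (last [::] h) ->
  \sum_(e <- succs c r n pol h) e.1 * Phi e.2 <= Phi (last [::] h).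
Proof.
move=> hI; rewrite (succs_formula R c r n pol h Phi).
have /andP[p0 p1] := pins01 R n pol Hpol h.
have h1 : pins R n pol h * Phi (rcons (last [::] h) [::]) <= pins R n pol h * Phi (last [::] h).
  have [->|hp] := eqVneq (pins R n pol h) 0; first by rewrite !mul0r.
  by apply: ler_wpM2l => //; apply: Phi_ins => //; apply: pins_ins hp.
have hmv : mvs R c r Phi (last [::] h) <= lamb R c r (last [::] h) * Phi (last [::] h).
  rewrite lamE /mvs mulr_suml; apply: ler_sum_in => a ha _.
  rewrite mulr_suml.
  rewrite [X in _ <= X](eq_bigr (fun k => r (nth [::] (last [::] h) a) k * Phi (last [::] h))); last first.
    by move=> k _; rewrite mulr1.
  exact: key_a.
have hl0 := lamb_ge0 R c r n Hr (last [::] h) hI.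
case: ifP => hl.
  apply: le_trans (lerD h1 (lexx _)) _.
  by rewrite -mulrDl [pins _ _ _ _ + _]addrC subrK mul1r.
apply: le_trans (lerD h1 (ler_wpM2l _ hmv)) _.
  by apply: divr_ge0; rewrite ?subr_ge0.
rewrite mulrA divfK; last by rewrite hl.
by rewrite -mulrDl [pins _ _ _ _ + _]addrC subrK mul1r.
Qed.

Lemma pot_bound N :
  prob c r n pol N [:: [::]] (fun s => (j < size s)%N && badp (nth [::] s j) (nth [::] s i))
  <= phi (j %/ D) (G [::]).
Proof.
have hb : forall s, Inv c n s ->
    ((j < size s)%N && badp (nth [::] s j) (nth [::] s i))%:R <= Phi s.
  move=> s hI; case hE: (_ && _).
    by move/andP: hE => [hj hb]; rewrite /Phi (leqNgt (size s) j) hj /= hb.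
  exact: Phi_ge0.
have := prob_super R c r n pol Hr Hpol Phi
  (fun s => (j < size s)%N && badp (nth [::] s j) (nth [::] s i)) hb key N [:: [::]] (Inv_init c n).
by rewrite /Phi /=.
Qed.

End Pot.

Lemma vertex_rconsE (c : seq nat -> nat) w k : vertex c (rcons w k) -> vertex c w && (k < c w).
Proof.
move/vertexP => H; apply/andP; split.
  apply/vertexP => i hi.
  have := H i; rewrite size_rcons nth_rcons hi -cats1 takel_cat; last exact: ltnW.
  by apply; apply: ltnW.
have := H (size w); rewrite size_rcons ltnSn nth_rcons ltnn eqxx -cats1 take_size_cat //.
by apply.
Qed.

Lemma gen_size (c : seq nat -> nat) m x : x \in gen c m -> size x = m.
Proof.
elim: m x => [|m IH] x /=; first by rewrite inE => /eqP ->.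
case/flattenP => L /mapP[w hw ->] /mapP[k _ ->].
by rewrite size_rcons (IH _ hw).
Qed.

Lemma gen_vertex (c : seq nat -> nat) w : vertex c w -> w \in gen c (size w).
Proof.
elim/last_ind: w => [|w k IH] hv; first by rewrite /= inE.
case/andP: (vertex_rconsE _ _ _ hv) => hw hk.
rewrite size_rcons /=; apply/flattenP.
exists [seq rcons w k0 | k0 <- iota 0 (c w)].
  by apply/mapP; exists w => //; apply: IH.
by apply/mapP; exists k => //; rewrite mem_iota add0n.
Qed.

Lemma bigmin_le_idx (T : Type) (L : seq T) (P : pred T) (F : T -> nat) d :
  \big[minn/d]_(x <- L | P x) F x <= d.
Proof.
elim: L => [|x L IH]; first by rewrite big_nil.
rewrite big_cons; case: ifP => _ //; exact: leq_trans (geq_minr _ _) IH.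
Qed.

Lemma bigmin_le_elem (T : eqType) (L : seq T) (P : pred T) (F : T -> nat) d x :
  x \in L -> P x -> \big[minn/d]_(y <- L | P y) F y <= F x.
Proof.
elim: L => [|y L IH] //; rewrite inE big_cons => /orP[/eqP <- ->|hx hP].
  exact: geq_minl.
case: ifP => _; last exact: IH.
exact: leq_trans (geq_minr _ _) (IH hx hP).
Qed.

Lemma bigmin_ge (T : eqType) (L : seq T) (P : pred T) (F : T -> nat) d a :
  a <= d -> (forall x, x \in L -> P x -> a <= F x) -> a <= \big[minn/d]_(y <- L | P y) F y.
Proof.
move=> hd; elim: L => [|y L IH] H; first by rewrite big_nil.
rewrite big_cons; case: ifP => hP.
  rewrite leq_min; apply/andP; split; first by apply: H; rewrite ?inE ?eqxx.
  by apply: IH => x hx; apply: H; rewrite inE hx orbT.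
by apply: IH => x hx; apply: H; rewrite inE hx orbT.
Qed.

Definition cntb (c : seq nat -> nat) (m : nat) (z x : seq nat) :=
  count (fun t => 1 < c (take t x)) (iota (size z) (m - size z)).

Definition Gmin (c : seq nat -> nat) (m : nat) (z : seq nat) :=
  \big[minn/m]_(x <- gen c m | prefix z x) cntb c m z x.

Lemma Gmin_HG1 c m z k : vertex c z -> size z < m -> k < c z ->
  Gmin c m z <= (1 < c z) + Gmin c m (rcons z k).
Proof.
move=> hv hm hk; rewrite -leq_subLR {2}/Gmin; apply: bigmin_ge.
  by rewrite leq_subLR; apply: leq_trans (bigmin_le_idx _ _ _ _ _) (leq_addl _ _).
move=> x hx hp; rewrite leq_subLR.
have hzx : prefix z x := prefix_trans (prefix_rcons z k) hp.
apply: leq_trans (bigmin_le_elem _ _ _ _ _ _ hx hzx) _.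
rewrite /cntb size_rcons -(subnSK hm) /=.
by move: hzx; rewrite prefixE => /eqP ->.
Qed.

Lemma Gmin_HG2 c m w : vertex c w -> size w = m -> Gmin c m w = 0.
Proof.
move=> hv hs; apply/eqP; rewrite -leqn0.
have hw : w \in gen c m by rewrite -hs; apply: gen_vertex.
apply: leq_trans (bigmin_le_elem _ _ _ _ _ _ hw (prefix_refl w)) _.
by rewrite /cntb hs subnn.
Qed.

Lemma Fox_le_size c x : Fox c x <= size x.
Proof. by rewrite /Fox; apply: leq_trans (count_size _ _) _; rewrite size_iota. Qed.

Lemma minF_le_Gmin c m : minF c m <= Gmin c m [::].
Proof.
apply: bigmin_ge.
  apply: leq_trans (bigmin_le_idx _ _ _ _ _) _.
  case E: (gen c m) => [|x L] /=; first by [].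
  apply: leq_trans (Fox_le_size c x) _.
  by rewrite (gen_size c m x) // E inE eqxx.
move=> x hx _.
apply: leq_trans (bigmin_le_elem _ _ _ _ _ _ hx isT) _.
rewrite /Fox /cntb /= subn0 (gen_size _ _ _ hx).
apply: sub_count => t /=; rewrite /deg.
by case: (c (take t x)) => [|[|k]] //=; case: (_ != _).
Qed.

Section Final.
Local Open Scope ring_scope.

Lemma qpow (R : realType) (eps : R) (A B : nat) : 0 < eps ->
  (1 / (1 + eps)) ^ (Posz A - Posz B) = phi R eps B A.
Proof.
move=> he.
have hne : 1 + eps != 0 by rewrite gt_eqF // addr_gt0.
rewrite div1r exprz_inv opprB expfzDr // -exprnN.
by rewrite /phi /tt.
Qed.

Lemma ler_sum_term (R : realType) (k : nat) (F : 'I_k -> R) (i0 : 'I_k) :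
  (forall i, 0 <= F i) -> F i0 <= \sum_i F i.
Proof.
move=> H; rewrite (bigD1 i0) //= lerDl.
by apply: sumr_ge0 => i _; apply: H.
Qed.

Lemma union_base (R : realType) c n m (s : seq (seq nat)) : Inv c n s ->
  1 - (distinct_at m s)%:R <=
  \sum_(i < n) \sum_(j < n)
    (((i : nat) < j)%N && ((j < size s)%N && badp m (nth [::] s j) (nth [::] s i)))%:R :> R.
Proof.
case=> hsn _ _ _.
case hd: (distinct_at m s).
  rewrite subrr; apply: sumr_ge0 => i _; apply: sumr_ge0 => j _; exact: ler0n.
rewrite subr0.
have [i0 [j0 [hij [hj hb]]]] : exists i0 j0, (i0 < j0)%N /\ (j0 < size s)%N /\
    badp m (nth [::] s j0) (nth [::] s i0).
  move/negbT: hd; rewrite /distinct_at => /allPn[a ha] /allPn[b hb].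
  rewrite !negb_imply => /and5P[hab hma hmb heq _].
  have ha' : (a < size s)%N by move: ha; rewrite mem_iota add0n.
  have hb' : (b < size s)%N by move: hb; rewrite mem_iota add0n.
  case: (ltngtP a b) => h.
  - exists a, b; split => //; split => //.
    by rewrite /badp hma hmb eq_sym heq.
  - exists b, a; split => //; split => //.
    by rewrite /badp hma hmb heq.
  - by move: hab; rewrite h eqxx.
have hj0n : (j0 < n)%N by apply: leq_trans hj hsn.
have hi0n : (i0 < n)%N by apply: ltn_trans hij hj0n.
apply: le_trans _ (ler_sum_term _ _ _ (Ordinal hi0n) _); last first.
  by move=> i; apply: sumr_ge0 => j _; apply: ler0n.
apply: le_trans _ (ler_sum_term _ _ _ (Ordinal hj0n) _); last first.
  by move=> j; apply: ler0n.
by rewrite /= hij hj hb.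
Qed.

End Final.

Local Open Scope ring_scope.

Theorem mainTheorem9 (R : realType) (c : seq nat -> nat)
  (r : seq nat -> nat -> R) (eps : R) (d n m : nat)
  (pol : seq (seq (seq nat)) -> R) :
  (* every vertex has at least one child (so T is infinite, d_T >= 1) *)
  (forall w, vertex c w -> (0 < c w)%N) ->
  min_children c d ->
  (* positive, uniformly bounded rates *)
  (forall w k, vertex c w -> (k < c w)%N -> 0 < r w k) ->
  (exists M : R, forall w k, vertex c w -> (k < c w)%N -> r w k <= M) ->
  (* (UE) *)
  0 < eps -> eps <= 1 ->
  (forall w k k', vertex c w -> (k < c w)%N -> (k' < c w)%N ->
     eps * r w k' <= r w k) ->
  (* arbitrary insertion rule *)
  (forall h, 0 <= pol h <= 1) ->
  forall N : nat,
    1 - (n ^ 2)%:R * (1 / (1 + eps)) ^ (Fn c d n m)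
      <= prob c r n pol N [:: [::]] (distinct_at m).
Proof.
move=> Hc [[w0 [hw0 hd0]] hmin] Hr _ heps heps1 HUE Hpol N.
pose B (i j : 'I_n) (s : seq (seq nat)) :=
  (((i : nat) < j)%N && ((j < size s)%N && badp m (nth [::] s j) (nth [::] s i))).
have hU := prob_union R c r n pol Hr Hpol n (distinct_at m) B
  (fun s hs => union_base R c n m s hs) N [:: [::]] (Inv_init c n).
set bnd := (1 / (1 + eps)) ^ Fn c d n m.
have hbnd0 : 0 <= bnd by apply: exprz_ge0; rewrite div1r invr_ge0 ltW // addr_gt0.
have hterm : forall i j : 'I_n, prob c r n pol N [:: [::]] (B i j) <= bnd.
  move=> i j; case hij: ((i : nat) < j)%N; last first.
    by rewrite prob_false // => s; rewrite /B hij.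
  rewrite /B hij /=.
  have hd1pos : (0 < d)%N by rewrite -hd0; apply: Hc.
  case hd1: (d == 1)%N.
    apply: le_trans (pot_bound R c r n pol m eps i j 1 (Gmin c m) Hr Hpol heps HUE hij
       isT _ _ _ N) _.
    - by move=> z _ hz.
    - by move=> z k hv hm hk; apply: Gmin_HG1.
    - by move=> w hv hw; apply: Gmin_HG2.
    rewrite /bnd /Fn hd1 (qpow _ _ _ _ heps); apply: phi_le; first exact: heps.
    by rewrite divn1; apply: leq_add; [apply: ltnW|apply: minF_le_Gmin].
  have hd2 : (1 < d)%N by rewrite ltn_neqAle eq_sym hd1 hd1pos.
  apply: le_trans (pot_bound R c r n pol m eps i j d.-1 (fun z => m - size z)%N Hr Hpol heps HUE hij
       _ _ _ _ N) _.
  - by rewrite -ltnS prednK.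
  - by move=> z hv _; rewrite prednK // hmin.
  - move=> z k hv hm hk /=.
    have -> : (1 < c z)%N by apply: leq_trans hd2 (hmin z hv).
    by rewrite size_rcons subnS; case: (m - size z)%N.
  - by move=> w _ ->; rewrite subnn.
  rewrite /bnd /Fn hd1 (qpow _ _ _ _ heps); apply: phi_le; first exact: heps.
  rewrite /= subn0 leq_add2r /ceil_div leq_div2r //.
  by apply: leq_trans (ltnW (ltn_ord j)) (leq_addr _ _).
have hsum : \sum_i \sum_j prob c r n pol N [:: [::]] (B i j) <= (n ^ 2)%:R * bnd.
  apply: le_trans (ler_sum _ (fun i _ => ler_sum _ (fun j _ => hterm i j))) _.
  by rewrite !sumr_const !card_ord mulr_natl expnS expn1 mulrnA.
have := le_trans hU hsum; rewrite lerBlDr => h.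
by rewrite lerBlDr addrC.
Qed.
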